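(* Let $(\mathbf F,\prec)$ be an IS-family over a finite set $V$. For every integer $x\ge0$, $|\mathbf{Pr}_x|\le 2^{x+1}|sm(\mathbf F)|$.
   Context: Let $V$ be a finite set, $n=|V|$, $\mathbf F$ a family of subsets of $V$ and $\prec$ a strict partial order on $\mathbf F$; $S\preceq S'$ means $S\prec S'$ or $S=S'$. For $S\in\mathbf F$ and $v\in V$, $S$ covers $v$ if there is $S'\in\mathbf F$ with $S'\prec S$ and $v\in S'\setminus S$. $Pred(S)$ is the set of $S'\in\mathbf F$ with $S'\prec S$ such that there is no $S''\in\mathbf F$ with $S'\prec S''\prec S$. The visible set $Vis(S)$ is the set of $v\in V$ such that $v\in S'$ for some $S'\in Pred(S)$ and $v$ is not covered by any element of $Pred(S)$. For $S\in\mathbf F$ and $v\in S$, a witness of $v$ w.r.t. $S$ is a $\prec$-minimal element $S'\in\mathbf F$ with $S\prec S'$ and $v\in S\setminus S'$. $(\mathbf F,\prec)$ is an IS-family if: (SE) there is a unique element $sm(\mathbf F)\in\mathbf F$ with $sm(\mathbf F)\prec S$ for every other $S\in\mathbf F$; (SM) $S_1\prec S_2$ implies $|S_1|<|S_2|$; (SW) for every $S\in\mathbf F$ and $v\in S$ there is at most one witness of $v$ w.r.t. $S$; (TE) if $S_1\prec S_2\prec S_3$ are in $\mathbf F$ and $v\in S_1\setminus S_2$ then $v\in S_1\setminus S_3$; (LVS) for every $S\in\mathbf F$ and $S'\in Pred(S)$, $|S'|\le |Vis(S)|$; (DVS) for every $S\in\mathbf F$ with $S\ne sm(\mathbf F)$,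 $Vis(S)$ is not a subset of $S$; (EC) $sm(\mathbf F)$ can be computed in $O(n^3)$ time, for given $S\in\mathbf F$ and $v\in S$ the witness of $v$ w.r.t. $S$ can be computed (or its nonexistence reported) in $O(n^3)$ time, and $S_1\prec S_2$ can be tested in $O(|S_1|)$ time. Notation: $hat(S)=S\setminus\bigcup_{S'\prec S}S'$; $ex(S)=|S|-|sm(\mathbf F)|$; $S\in\mathbf F$ is principal if $hat(S)\ne\emptyset$; $\mathbf{Pr}_x$ is the family of all principal sets $S\in\mathbf F$ with $ex(S)\le x$. *)

(* Defs.v *)
From mathcomp Require Import all_boot.
Set Implicit Arguments. Unset Strict Implicit. Unset Printing Implicit Defensive.

Section ISFamily.
Variable V : finType.
Variable F : {set {set V}}.
Variable prec : rel {set V}.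

Definition strict_po_on : Prop :=
  (forall S, S \in F -> ~~ prec S S) /\
  (forall S1 S2 S3, S1 \in F -> S2 \in F -> S3 \in F ->
     prec S1 S2 -> prec S2 S3 -> prec S1 S3).

Definition covers (S : {set V}) (v : V) : bool :=
  [exists S' in F, prec S' S && (v \in S' :\: S)].

Definition Pred (S : {set V}) : {set {set V}} :=
  [set S' in F | prec S' S && ~~ [exists S'' in F, prec S' S'' && prec S'' S]].

Definition Vis (S : {set V}) : {set V} :=
  [set v | [exists S' in Pred S, v \in S'] &&
           ~~ [exists S' in Pred S, covers S' v]].

Definition witness (S : {set V}) (v : V) (W : {set V}) : bool :=
  [&& W \in F, prec S W, v \in S :\: W &
      ~~ [exists W' in F, [&& prec W' W, prec S W' & v \in S :\: W']]].

Definition is_sm (s : {set V}) : Prop :=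
  s \in F /\ forall S, S \in F -> S != s -> prec s S.

(* IS-family axioms (SE), (SM), (SW), (TE), (LVS), (DVS), with s = sm(F) *)
Definition IS_family (s : {set V}) : Prop :=
  strict_po_on /\ (
      (is_sm s /\ (forall s', is_sm s' -> s' = s)) /\
      (forall S1 S2, S1 \in F -> S2 \in F -> prec S1 S2 -> #|S1| < #|S2|) /\
      (forall S v W1 W2, S \in F -> v \in S ->
                  witness S v W1 -> witness S v W2 -> W1 = W2) /\
      (forall S1 S2 S3 v, S1 \in F -> S2 \in F -> S3 \in F ->
                  prec S1 S2 -> prec S2 S3 -> v \in S1 :\: S2 -> v \in S1 :\: S3) /\
      (forall S S', S \in F -> S' \in Pred S -> #|S'| <= #|Vis S|) /\
      (forall S, S \in F -> S != s -> ~~ (Vis S \subset S))).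

Definition hat (S : {set V}) : {set V} :=
  S :\: \bigcup_(S' in F | prec S' S) S'.

Definition ex (s S : {set V}) : nat := #|S| - #|s|.

Definition Pr (s : {set V}) (x : nat) : {set {set V}} :=
  [set S in F | (hat S != set0) && (ex s S <= x)].

End ISFamily.

(* Main.v *)
Require Import Defs.
From mathcomp Require Import all_boot zify.
Set Implicit Arguments. Unset Strict Implicit. Unset Printing Implicit Defensive.

Lemma sum_sub_leq (T : finType) (A B : {pred T}) (f : T -> nat) :
  {subset A <= B} -> \sum_(i in A) f i <= \sum_(i in B) f i.
Proof.
move=> AB; rewrite [X in X <= _]big_mkcond [X in _ <= X]big_mkcond /=.
apply: leq_sum => i _; case: ifP => iA; first by rewrite (AB _ iA).
by [].
Qed.

Section Aux.
Variables (V : finType) (F : {set {set V}}) (prec : rel {set V}).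
Hypothesis (trans : forall S1 S2 S3, S1 \in F -> S2 \in F -> S3 \in F ->
     prec S1 S2 -> prec S2 S3 -> prec S1 S3).
Hypothesis (SM : forall S1 S2, S1 \in F -> S2 \in F -> prec S1 S2 -> #|S1| < #|S2|).

Lemma pred_exists S Q : Q \in F -> S \in F -> prec Q S ->
  exists2 P, P \in Pred F prec S & (P == Q) || prec Q P.
Proof.
move=> QF SF; move: {2}(#|S| - #|Q|) (leqnn (#|S| - #|Q|)) => k.
elim: k Q QF => [|k IH] Q QF Hk QS.
  by have := SM QF SF QS; lia.
case PQ: (Q \in Pred F prec S); first by exists Q; rewrite ?eqxx.
move: PQ; rewrite inE QF QS /= => /negbFE /existsP [S'' /andP [S''F /andP [QS'' S''S]]].
have [|P PP HP] := IH S'' S''F _ S''S.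
  by have := SM QF S''F QS''; have := SM S''F SF S''S; lia.
exists P => //; apply/orP; right.
case/orP: HP => [/eqP -> //|HP].
have PF : P \in F by move: PP; rewrite inE => /andP [].
exact: (trans QF S''F PF).
Qed.

Lemma birth w Q : Q \in F -> w \in Q ->
  exists2 B, B \in F & ((B == Q) || prec B Q) && (w \in hat F prec B).
Proof.
move: {2}#|Q| (leqnn #|Q|) => k; elim: k Q => [|k IH] Q Hk QF wQ.
  by move: Hk; rewrite leqn0 cards_eq0 => /eqP Q0; rewrite Q0 inE in wQ.
case wh: (w \in hat F prec Q); first by exists Q; rewrite ?eqxx.
move: wh; rewrite /hat inE wQ andbT => /negbFE /bigcupP [S' /andP [S'F S'Q] wS'].
have [|B BF /andP [HB wB]] := IH S' _ S'F wS'.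
  by have := SM S'F QF S'Q; lia.
exists B => //; rewrite wB andbT; apply/orP; right.
case/orP: HB => [/eqP -> //|HB]; exact: (trans BF S'F QF).
Qed.
End Aux.

Section Main.
Variables (V : finType) (F : {set {set V}}) (prec : rel {set V}).
Hypothesis (trans : forall S1 S2 S3, S1 \in F -> S2 \in F -> S3 \in F ->
     prec S1 S2 -> prec S2 S3 -> prec S1 S3).
Hypothesis (SM : forall S1 S2, S1 \in F -> S2 \in F -> prec S1 S2 -> #|S1| < #|S2|).
Hypothesis (TE : forall S1 S2 S3 v, S1 \in F -> S2 \in F -> S3 \in F ->
                  prec S1 S2 -> prec S2 S3 -> v \in S1 :\: S2 -> v \in S1 :\: S3).
Hypothesis (LVS : forall S S', S \in F -> S' \in Pred F prec S -> #|S'| <= #|Vis F prec S|).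

Lemma PredF S P : P \in Pred F prec S -> (P \in F) && prec P S.
Proof. by rewrite inE => /andP [-> /andP [-> _]]. Qed.

Lemma vis_not_hat S w : w \in Vis F prec S -> w \notin hat F prec S.
Proof.
rewrite inE => /andP [/existsP [P /andP [PP wP]] _].
case/andP: (PredF PP) => PF PS.
rewrite /hat inE negb_and negbK; apply/orP; left.
by apply/bigcupP; exists P => //; rewrite PF.
Qed.

Lemma hat_vis_card S : #|hat F prec S| + #|Vis F prec S| <= #|S| + #|Vis F prec S :\: S|.
Proof.
rewrite -(cardsID S (Vis F prec S)) addnA leq_add2r.
have disj : hat F prec S :&: (Vis F prec S :&: S) = set0.
  apply/setP => w; rewrite in_setI in_setI in_set0.
  case: (boolP (w \in Vis F prec S)) => wv; last by rewrite andbF.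
  by rewrite (negbTE (vis_not_hat wv)).
rewrite -cardsUI disj cards0 addn0; apply: subset_leq_card.
apply/subsetP => w; rewrite in_setU in_setI => /orP [|/andP [_ ->] //].
by rewrite /hat inE => /andP [_ ->].
Qed.

Lemma vis_witness S B w : S \in F -> B \in F -> prec B S -> w \in B ->
  w \in Vis F prec S -> w \notin S -> witness F prec B w S.
Proof.
move=> SF BF BS wB wv wS.
rewrite /witness SF BS /= inE wB wS /=.
apply/negP => /existsP [W' /andP [W'F /and3P [W'S BW' wBW']]].
have [P PP HP] := pred_exists trans SM W'F SF W'S.
case/andP: (PredF PP) => PF PS.
have [wnP BP] : w \in B :\: P /\ prec B P.
  case/orP: HP => [/eqP -> //|HP]; split.
    exact: (TE BF W'F PF BW' HP wBW').
  exact: (trans BF W'F PF BW' HP).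
move: wv; rewrite inE => /andP [_ /negP]; apply.
apply/existsP; exists P; rewrite PP /=.
by apply/existsP; exists B; rewrite BF BP.
Qed.

Lemma arith h d t p q : 0 < d -> 0 < t -> t < q -> 0 < p -> h <= t + d ->
  1 + h * (p - 1) <= d * (p * q - 1).
Proof.
move=> d0 t0 tq p0 hle.
have : h * (p - 1) <= (t + d) * (p - 1) by apply: leq_mul.
have : t.+1 * p <= q * p by apply: leq_mul.
nia.
Qed.

Lemma arith2 a v sS dd p b : a + v <= sS + dd -> p <= v -> b <= p -> b < sS ->
  a <= (sS - b) + dd.
Proof. lia. Qed.

Definition bfun S w : {set V} :=
  odflt S [pick B in F | prec B S && (w \in hat F prec B)].

Lemma bfunP S w : S \in F -> w \in Vis F prec S ->
  [/\ bfun S w \in F, prec (bfun S w) S & w \in hat F prec (bfun S w)].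
Proof.
move=> SF; rewrite inE => /andP [/existsP [P /andP [PP wP]] _].
case/andP: (PredF PP) => PF PS.
have [B BF /andP [HB wB]] := birth trans SM PF wP.
have BS : prec B S by case/orP: HB => [/eqP -> //|HB]; exact: (trans BF PF SF HB PS).
rewrite /bfun; case: pickP => [B' /andP [B'F /andP [B'S wB']] | H] /=; first by split.
by have := H B; rewrite BF BS wB.
Qed.

Lemma per_S (s : {set V}) x S : S \in F -> (forall T, T \in F -> #|s| <= #|T|) ->
  Vis F prec S :\: S != set0 -> ex s S <= x ->
  1 + #|hat F prec S| * (2 ^ (x.+1 - ex s S) - 1) <=
  \sum_(w in Vis F prec S :\: S) (2 ^ (x.+1 - ex s (bfun S w)) - 1).
Proof.
move=> SF sle /set0Pn [w0 w0D] exS.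
case: (@arg_maxnP _ w0 (mem (Vis F prec S :\: S)) (fun w => #|bfun S w|) w0D).
move=> ws wsD Hmax.
have wsV : ws \in Vis F prec S.
  move: wsD; rewrite /= in_setD. move=> /andP [_ ->]. done.
have [BF BS wB] := bfunP SF wsV.
set B := bfun S ws in BF BS wB Hmax.
have sB := sle _ BF.
have BltS := SM BF SF BS.
have [P PP HP] := pred_exists trans SM BF SF BS.
case/andP: (PredF PP) => PF PS.
have BleP : #|B| <= #|P| by case/orP: HP => [/eqP -> //|HP]; exact: ltnW (SM BF PF HP).
have LV := LVS SF PP.
have HV := hat_vis_card S.
set d := #|Vis F prec S :\: S|.
have d0 : 0 < d by apply/card_gt0P; exists w0.
apply: (@leq_trans (d * (2 ^ (x.+1 - ex s B) - 1))).
  have -> : 2 ^ (x.+1 - ex s B) = 2 ^ (x.+1 - ex s S) * 2 ^ (#|S| - #|B|).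
    by rewrite -expnD; congr (2 ^ _); rewrite /ex in exS *; lia.
  apply: (@arith _ _ (#|S| - #|B|)).
  - exact: d0.
  - by rewrite subn_gt0.
  - by apply: ltn_expl.
  - by rewrite expn_gt0.
  - exact: (arith2 HV LV BleP BltS).
rewrite -sum_nat_const; apply: leq_sum => w wD.
have wV : w \in Vis F prec S by move: wD; rewrite in_setD => /andP [_ ->].
have [BwF _ _] := bfunP SF wV.
have := Hmax w wD; have := sle _ BwF => h1 h2.
apply: leq_sub2r; apply: leq_pexp2l => //; rewrite /ex.
by apply: leq_sub2l; apply: leq_sub2r.
Qed.

Lemma main_bound (s : {set V}) x :
  s \in F -> (forall S, S \in F -> S != s -> prec s S) ->
  (forall S v W1 W2, S \in F -> v \in S ->
     witness F prec S v W1 -> witness F prec S v W2 -> W1 = W2) ->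
  (forall S, S \in F -> S != s -> ~~ (Vis F prec S \subset S)) ->
  #|Pr F prec s x| <= 2 ^ (x + 1) * #|s|.
Proof.
move=> sF smin SW DVS.
have sle : forall T, T \in F -> #|s| <= #|T|.
  move=> T TF; case: (eqVneq T s) => [-> //|Ts]; exact: ltnW (SM sF TF (smin T TF Ts)).
pose Vf T := 2 ^ (x.+1 - ex s T) - 1.
set Pr' := Pr F prec s x.
set A := Pr' :\ s.
have inA : forall S, S \in A -> [/\ S \in F, hat F prec S != set0, ex s S <= x & S != s].
  by move=> S; rewrite !inE => /andP [-> /and3P [-> -> ->]].
pose Dm := [set p : {set V} * V | (p.1 \in A) && (p.2 \in Vis F prec p.1 :\: p.1)].
pose phi (p : {set V} * V) := (bfun p.1 p.2, p.2).
pose Sl := [set q : {set V} * V | (q.1 \in Pr') && (q.2 \in hat F prec q.1)].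
have step1 : \sum_(S in A) (1 + #|hat F prec S| * Vf S) <=
             \sum_(S in A) \sum_(w in Vis F prec S :\: S) Vf (bfun S w).
  apply: leq_sum => S SA; have [SF _ exS Ss] := inA S SA.
  apply: per_S => //; rewrite setD_eq0; exact: DVS.
have step2 : \sum_(S in A) \sum_(w in Vis F prec S :\: S) Vf (bfun S w) =
             \sum_(p in Dm) Vf (phi p).1.
  rewrite pair_big_dep; apply: eq_bigl => p; by rewrite [RHS]in_set.
have inj : {in Dm &, injective phi}.
  move=> [S1 w1] [S2 w2] H1 H2 [eB ew]; move: H1 H2.
  rewrite [_ \in Dm]in_set [_ \in Dm]in_set /= => /andP [S1A w1D] /andP [S2A w2D].
  subst w2.
  have [S1F _ _ _] := inA S1 S1A; have [S2F _ _ _] := inA S2 S2A.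
  move: w1D w2D; rewrite !in_setD => /andP [w1S1 w1V] /andP [w1S2 w1V2].
  have [BF BS1 wB] := bfunP S1F w1V.
  have [_ BS2 _] := bfunP S2F w1V2.
  rewrite -eB in BS2.
  have wB' : w1 \in bfun S1 w1 by move: wB; rewrite /hat in_setD => /andP [_ ->].
  have W1 := vis_witness S1F BF BS1 wB' w1V w1S1.
  have W2 := vis_witness S2F BF BS2 wB' w1V2 w1S2.
  by rewrite (SW _ _ _ _ BF wB' W1 W2).
have step3 : \sum_(p in Dm) Vf (phi p).1 <= \sum_(q in Sl) Vf q.1.
  rewrite -(big_imset (fun q => Vf q.1) inj); apply: sum_sub_leq.
  move=> q /imsetP [[S w] pD ->]; move: pD; rewrite in_set /= => /andP [SA wD].
  have [SF _ exS _] := inA S SA.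
  move: wD; rewrite in_setD => /andP [wS wV].
  have [BF BS wB] := bfunP SF wV.
  rewrite inE /= wB andbT inE BF /=; apply/andP; split.
    by apply/set0Pn; exists w.
  apply: leq_trans exS; rewrite /ex; apply: leq_sub2r; exact: ltnW (SM BF SF BS).
have step4 : \sum_(q in Sl) Vf q.1 = \sum_(B in Pr') #|hat F prec B| * Vf B.
  transitivity (\sum_(B in Pr') \sum_(w in hat F prec B) Vf B).
    rewrite pair_big_dep; apply: eq_bigl => q; by rewrite [LHS]in_set.
  by apply: eq_bigr => B _; rewrite sum_nat_const.
have hs : #|hat F prec s| <= #|s|.
  by apply: subset_leq_card; apply/subsetP => w; rewrite /hat in_setD => /andP [_ ->].
have step5 : \sum_(B in Pr') #|hat F prec B| * Vf B <=
             #|s| * Vf s + \sum_(S in A) #|hat F prec S| * Vf S.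
  case sP : (s \in Pr').
    rewrite (bigD1 s) //=; apply: leq_add; first by apply: leq_mul.
    by rewrite leq_eqVlt; apply/orP; left; apply/eqP; apply: eq_bigl => S; rewrite !inE andbC.
  apply: leq_trans (leq_addl _ _); rewrite leq_eqVlt; apply/orP; left; apply/eqP.
  apply: eq_bigl => S; rewrite [RHS]in_setD1; case: (eqVneq S s) => [->|Ss] /=; first by rewrite sP.
  done.
have HA : #|A| <= #|s| * Vf s.
  move: (leq_trans step1 (leq_trans (eq_leq step2) (leq_trans step3 (leq_trans (eq_leq step4) step5)))).
  rewrite big_split /= sum1_card leq_add2r. done.
have Vs : Vf s = 2 ^ x.+1 - 1 by rewrite /Vf /ex subnn subn0.
rewrite (cardsD1 s) -/A addn1.
case sP : (s \in Pr') => /=.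
  have s0 : 0 < #|s|.
    move: sP; rewrite inE => /and3P [_ /set0Pn [w wh] _].
    by apply/card_gt0P; exists w; move: wh; rewrite /hat in_setD => /andP [_ ->].
  have e : 0 < 2 ^ x.+1 by rewrite expn_gt0.
  move: HA; rewrite Vs; move: (#|A|) (#|s|) (2 ^ x.+1) s0 e; clear; move=> a b p; nia.
move: HA; rewrite Vs; move: (#|A|) (#|s|) (2 ^ x.+1); clear; move=> a b p; nia.
Qed.

End Main.

Theorem proposition5 (V : finType) (F : {set {set V}}) (prec : rel {set V})
  (s : {set V}) :
  IS_family F prec s ->
  forall x : nat, #|Pr F prec s x| <= 2 ^ (x + 1) * #|s|.
Proof.
move=> [[_ trans] [[[sF smin] _] [SM [SW [TE [LVS DVS]]]]]] x.
by apply: (main_bound trans SM TE LVS).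
Qed.
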